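(* Let $(f_0, M_0, \Lambda_0, \mathcal{Q}_0)$ be a SIMDG with induced set $\mathcal{P}_0$ and training distribution $P_{\mathrm{tr}}$, and let $R$, $\gamma_0$ and the BCF $f_\star$ be as in the context. Then $f_\star$ is invariant, i.e. $P_{\mathrm{tr}}^{Y-f_\star(X)}=P^{Y-f_\star(X)}$ for all $P\in\mathcal{P}_0$. Moreover, with $f_{\mathrm{LS}}(x):=\mathrm{E}_{P_{\mathrm{tr}}}[Y\mid X=x]$ and $\mathcal{R}(P,f):=\mathrm{E}_P[(Y-f(X))^2]$, $$\mathcal{R}(P_{\mathrm{tr}}, f_\star)=\mathcal{R}(P_{\mathrm{tr}}, f_{\mathrm{LS}})+\mathrm{E}_{P_{\mathrm{tr}}}\Big[\big(\mathrm{E}_{P_{\mathrm{tr}}}[\gamma_0(V)\mid R^\top X]-\mathrm{E}_{P_{\mathrm{tr}}}[\gamma_0(V)\mid X]\big)^2\Big].$$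
   Context: Fix integers $p,r\ge 1$. A SIMDG is a tuple $(f_0, M_0, \Lambda_0, \mathcal{Q}_0)$ where $f_0:\mathbb{R}^p\to\mathbb{R}$ is measurable, $M_0\in\mathbb{R}^{p\times r}$, $\Lambda_0$ is a distribution on $\mathbb{R}^{1+p}$ such that $(U,V)\sim\Lambda_0$ satisfies $\mathrm{E}[(U,V)]=0$ and $\mathrm{E}[\|(U,V)\|_2^2]<\infty$, and $\mathcal{Q}_0$ is a set of distributions on $\mathbb{R}^r$. For each $Q\in\mathcal{Q}_0$ the model induces a distribution $P$ of $(U,V,X,Y,Z)$ by drawing $((U,V),Z)\sim\Lambda_0\otimes Q$ and setting $X = M_0 Z + V$, $Y = f_0(X)+U$; $\mathcal{P}_0$ is the set of all such induced distributions. Standing setting: $\sup_{P\in\mathcal{P}_0}\mathrm{E}_P[f_0(X)]^2<\infty$; $Q_{\mathrm{tr}}\in\mathcal{Q}_0$ satisfies $\mathrm{E}_{Q_{\mathrm{tr}}}[Z]=0$ and $\mathrm{E}_{Q_{\mathrm{tr}}}[ZZ^\top]\succ 0$; $P_{\mathrm{tr}}$ is the distribution induced by $Q_{\mathrm{tr}}$. $P^{W}$ denotes the distribution of $W$ under $P$. Let $q=\mathrm{rank}(M_0)$; if $q<p$, $R\in\mathbb{R}^{p\times(p-q)}$ has columns forming an orthonormal basis of $\ker(M_0^\top)$, and if $q=p$, $R$ is the zero vector in $\mathbb{R}^{p\times 1}$. $\gamma_0(v):=\mathrm{E}_{P_{\mathrm{tr}}}[U\mid V=v]$. The boosted control function is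 $f_\star(x):=f_0(x)+\mathrm{E}_{P_{\mathrm{tr}}}[\gamma_0(V)\mid R^\top X = R^\top x]$ (a fixed function, defined for $P_{\mathrm{tr}}$-a.e. $x$). *)

(* Defs.v *)
From HB Require Import structures.
From mathcomp Require Import all_boot all_order all_algebra.
From mathcomp Require Import all_classical all_reals all_analysis.
Set Implicit Arguments. Unset Strict Implicit. Unset Printing Implicit Defensive.
Import numFieldNormedType.Exports.
Import Order.TTheory GRing.Theory Num.Theory.
Local Open Scope classical_set_scope.
Local Open Scope ring_scope.

Definition coord_sets (R : realType) (n : nat) : set (set 'cV[R]_n) :=
  fun S => exists i : 'I_n, exists A : set R^o, measurable A /\
           S = (fun x : 'cV[R]_n => x i ord0) @^-1` A.

Arguments coord_sets : clear implicits.

(* R^n with its Borel (= product) sigma-algebra, generated by coordinates. *)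
Notation vecT R n := (g_sigma_algebraType (coord_sets R n)).

(* Version of a conditional expectation as a function of phi (Doob–Dynkin form):
   g is a (measurable) version of  x |-> E_mu[W | phi = x]  iff
   g is measurable, g o phi is integrable, and for every measurable B,
   E_mu[W 1{phi in B}] = E_mu[g(phi) 1{phi in B}]. *)
Definition is_cond_exp d d' (T : measurableType d) (S : measurableType d')
  (R : realType) (mu : {measure set T -> \bar R}) (W : T -> R) (phi : T -> S)
  (g : S -> R) : Prop :=
  measurable_fun setT g /\
  mu.-integrable setT (fun w => (g (phi w))%:E) /\
  forall B : set S, measurable B ->
    (\int[mu]_(w in phi @^-1` B) (W w)%:E =
     \int[mu]_(w in phi @^-1` B) (g (phi w))%:E)%E.

(* The SIMDG sample space: omega = ((u, v), z) drawn from Lambda0 (x) Q. *)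
Notation Omega R p r := ((R * vecT R p) * vecT R r)%type.

Section simdg.
Variables (R : realType) (p r : nat) (f0 : vecT R p -> R) (M0 : 'M[R]_(p, r)).
Definition U_ (w : Omega R p r) : R := w.1.1.
Definition V_ (w : Omega R p r) : vecT R p := w.1.2.
Definition Z_ (w : Omega R p r) : vecT R r := w.2.
Definition X_ (w : Omega R p r) : vecT R p := M0 *m Z_ w + V_ w.
Definition Y_ (w : Omega R p r) : R := f0 (X_ w) + U_ w.
End simdg.
Arguments U_ {R p r}.
Arguments V_ {R p r}.
Arguments Z_ {R p r}.
Arguments X_ {R p r}.
Arguments Y_ {R p r}.

(* the boosted control function  f*(x) = f0(x) + h(R^T x),
   with h a version of  E_Ptr[gamma0(V) | R^T X = .] *)
Definition bcf (R : realType) (p k : nat) (f0 : vecT R p -> R)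
  (Rm : 'M[R]_(p, k)) (h : vecT R k -> R) (x : vecT R p) : R :=
  f0 x + h (Rm^T *m x).

(* Main.v *)
Require Import Defs.
From HB Require Import structures.
From mathcomp Require Import all_boot all_order all_algebra.
From mathcomp Require Import all_classical all_reals all_analysis.
From mathcomp Require Import measurable_realfun.
From mathcomp Require Import ring lra.
From mathcomp Require finmap.
Import numFieldNormedType.Exports.
Import Order.TTheory GRing.Theory Num.Theory.
Local Open Scope classical_set_scope.
Local Open Scope ring_scope.

Module Helpers.
Set Implicit Arguments. Unset Strict Implicit. Unset Printing Implicit Defensive.
Import finmap.

Section vecmeas.
Context (R : realType).

Lemma coord_mfun n (i : 'I_n) : measurable_fun setT (fun x : vecT R n => x i ord0).
Proof.
move=> _ A mA; rewrite setTI; apply: sub_sigma_algebra.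
by exists i, A; split.
Qed.

Lemma vec_mfun d (T : measurableType d) n (f : T -> vecT R n) :
  (forall i : 'I_n, measurable_fun setT (fun w => f w i ord0)) ->
  measurable_fun setT f.
Proof.
move=> H; apply: (@measurability _ _ _ _ setT f (coord_sets R n)) => //.
move=> _ [S [i [A [mA ->]]] <-].
have := H i measurableT A mA.
by congr measurable.
Qed.

Lemma mulmx_mfun d (T : measurableType d) n m (A : 'M[R]_(m, n)) (f : T -> vecT R n) :
  measurable_fun setT f -> measurable_fun setT (fun w => (A *m f w : vecT R m)).
Proof.
move=> mf; apply: vec_mfun => i.
rewrite /=.
under eq_fun do rewrite mxE.
apply: measurable_sum => j.
apply: measurable_funM => //.
exact: measurableT_comp (coord_mfun j) mf.
Qed.

Lemma addv_mfun d (T : measurableType d) n (f g : T -> vecT R n) :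
  measurable_fun setT f -> measurable_fun setT g ->
  measurable_fun setT (fun w => (f w + g w : vecT R n)).
Proof.
move=> mf mg; apply: vec_mfun => i.
under eq_fun do rewrite mxE.
apply: measurable_funD.
exact: measurableT_comp (coord_mfun i) mf.
exact: measurableT_comp (coord_mfun i) mg.
Qed.

End vecmeas.

Section L2.
Context d (T : measurableType d) (R : realType) (mu : measure T R)
  (muT : mu setT = 1%E).

Definition L2 (F : T -> R) := measurable_fun setT F /\
  mu.-integrable setT (fun x => (F x ^+ 2)%:E).

Definition Ex (F : T -> R) : R := fine (\int[mu]_x (F x)%:E).

Lemma int_cst (c : R) : mu.-integrable setT (fun _ => c%:E).
Proof.
apply/integrableP; split; first exact: measurable_cst.
rewrite integral_cst // muT mule1 //=.
by rewrite ltry.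
Qed.

Lemma L2_mul F G : L2 F -> L2 G -> mu.-integrable setT (fun x => (F x * G x)%:E).
Proof.
move=> [mF iF] [mG iG].
apply: (le_integrable _ _ _ (integrableD measurableT iF iG)) => //.
  by apply/measurable_EFinP; exact: measurable_funM.
move=> x _ /=; rewrite lee_fin.
rewrite normrM (ger0_norm (addr_ge0 (sqr_ge0 _) (sqr_ge0 _))).
rewrite -(real_normK (num_real (F x))) -(real_normK (num_real (G x))).
have := normr_ge0 (F x); have := normr_ge0 (G x).
nra.
Qed.

Lemma L2_cst c : L2 (fun _ => c).
Proof. split; [exact: measurable_cst | exact: int_cst]. Qed.

Lemma L2_int F : L2 F -> mu.-integrable setT (fun x => (F x)%:E).
Proof.
move=> hF; apply: (eq_integrable measurableT _ _ _ (L2_mul hF (L2_cst 1))) => x _.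
by rewrite mulr1.
Qed.

Lemma L2D F G : L2 F -> L2 G -> L2 (fun x => F x + G x).
Proof.
move=> hF hG; split; first exact: (measurable_funD hF.1 hG.1).
have i2 := integrableZl measurableT 2 (L2_mul hF hG).
apply: (eq_integrable measurableT _ _ _ (integrableD measurableT (integrableD measurableT hF.2 i2) hG.2)) => x _ /=.
by rewrite -!EFinM -!EFinD; congr EFin; ring.
Qed.

Lemma L2N F : L2 F -> L2 (fun x => - F x).
Proof.
move=> hF; split; first exact: measurableT_comp hF.1.
by apply: (eq_integrable measurableT _ _ _ hF.2) => x _; rewrite sqrrN.
Qed.

Lemma L2B F G : L2 F -> L2 G -> L2 (fun x => F x - G x).
Proof. by move=> hF hG; apply: L2D hF (L2N hG). Qed.

Lemma L2_bounded (F : T -> R) (c : R) : measurable_fun setT F -> (forall x, `|F x| <= c) -> L2 F.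
Proof.
move=> mF Fc; split => //.
apply: (le_integrable _ _ _ (int_cst (c ^+ 2))) => //.
  by apply/measurable_EFinP; exact: measurable_funX.
move=> x _; rewrite !abse_EFin lee_fin.
rewrite !ger0_norm ?sqr_ge0 // -(real_normK (num_real (F x))).
have := Fc x; have := normr_ge0 (F x); nra.
Qed.

Lemma ExE F : mu.-integrable setT (fun x => (F x)%:E) ->
  (\int[mu]_x (F x)%:E = (Ex F)%:E)%E.
Proof. by move=> iF; rewrite fineK // integrable_fin_num. Qed.

Lemma ExD F G : mu.-integrable setT (fun x => (F x)%:E) ->
  mu.-integrable setT (fun x => (G x)%:E) ->
  Ex (fun x => F x + G x) = Ex F + Ex G.
Proof.
move=> iF iG; rewrite /Ex.
under eq_integral do rewrite EFinD.
rewrite integralD // fineD // integrable_fin_num //.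
Qed.

Lemma ExB F G : mu.-integrable setT (fun x => (F x)%:E) ->
  mu.-integrable setT (fun x => (G x)%:E) ->
  Ex (fun x => F x - G x) = Ex F - Ex G.
Proof.
move=> iF iG; rewrite /Ex.
under eq_integral do rewrite EFinB.
rewrite (integralB measurableT iF iG) fineB // integrable_fin_num //.
Qed.

Lemma ExZ F c : mu.-integrable setT (fun x => (F x)%:E) ->
  Ex (fun x => c * F x) = c * Ex F.
Proof.
move=> iF; rewrite /Ex.
under eq_integral do rewrite EFinM.
by rewrite integralZl // fineM // integrable_fin_num.
Qed.

Lemma intD F G : mu.-integrable setT (fun x => (F x)%:E) ->
  mu.-integrable setT (fun x => (G x)%:E) ->
  mu.-integrable setT (fun x => (F x + G x)%:E).
Proof.
move=> iF iG; apply: (eq_integrable measurableT _ _ _ (integrableD measurableT iF iG)).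
by move=> x _; rewrite EFinD.
Qed.

Lemma intB F G : mu.-integrable setT (fun x => (F x)%:E) ->
  mu.-integrable setT (fun x => (G x)%:E) ->
  mu.-integrable setT (fun x => (F x - G x)%:E).
Proof.
move=> iF iG; apply: (eq_integrable measurableT _ _ _ (integrableB measurableT iF iG)).
by move=> x _; rewrite EFinB.
Qed.

Lemma intZ F c : mu.-integrable setT (fun x => (F x)%:E) ->
  mu.-integrable setT (fun x => (c * F x)%:E).
Proof.
move=> iF; apply: (eq_integrable measurableT _ _ _ (integrableZl measurableT c iF)).
by move=> x _; rewrite EFinM.
Qed.

Lemma Ex_le F G : mu.-integrable setT (fun x => (F x)%:E) ->
  mu.-integrable setT (fun x => (G x)%:E) -> (forall x, F x <= G x) ->
  Ex F <= Ex G.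
Proof.
move=> iF iG FG; rewrite /Ex; apply: fine_le; rewrite ?inE ?integrable_fin_num //.
by apply: le_integral => // x _; rewrite lee_fin.
Qed.

Lemma eq_Ex F G : F =1 G -> Ex F = Ex G.
Proof. by move=> FG; rewrite /Ex; congr fine; apply: eq_integral => x _; rewrite FG. Qed.

End L2.

Section CE.
Context d d' (T : measurableType d) (S : measurableType d') (R : realType)
  (mu : measure T R).
Variables (phi : T -> S) (mphi : measurable_fun setT phi).

Lemma ind_mul (A : set T) (F : T -> R) :
  (\int[mu]_x (\1_A x * F x)%:E = \int[mu]_(x in A) (F x)%:E)%E.
Proof.
rewrite [RHS]integral_mkcond; apply: eq_integral => x _.
rewrite /patch indicE; case: (x \in A) => /=.
  by rewrite mul1r.
by rewrite mul0r.
Qed.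

Lemma int_indic_mul (A : set T) (V : T -> R) : measurable A ->
  measurable_fun setT V -> mu.-integrable setT (fun x => (V x)%:E) ->
  mu.-integrable setT (fun x => (\1_A x * V x)%:E).
Proof.
move=> mA mV iV; apply: (le_integrable measurableT _ _ iV).
  apply/measurable_EFinP; apply: measurable_funM => //.
move=> x _; rewrite !abse_EFin lee_fin normrM indicE.
by case: (x \in A); rewrite ?normr1 ?normr0 ?mul1r ?mul0r.
Qed.

Import HBNNSimple.

Lemma ce_simple (V : T -> R) (mV : measurable_fun setT V)
  (iV : mu.-integrable setT (fun x => (V x)%:E)) (s : {nnsfun S >-> R}) :
  (\int[mu]_x (s (phi x) * V x)%:E =
  \sum_(i < #|` fset_set (s @` setT)|)
    ((fset_set (s @` setT))`_i)%:E *
    \int[mu]_(x in phi @^-1` (s @^-1` [set (fset_set (s @` setT))`_i])) (V x)%:E)%E.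
Proof.
under eq_integral do rewrite (fimfunEord s (phi _)) big_distrl /= -sumEFin.
rewrite integral_sum //; last first.
  move=> i; under eq_fun do rewrite -mulrA EFinM.
  apply: integrableZl => //.
  apply: (int_indic_mul (A := phi @^-1` (s @^-1` [set _]))) => //.
  by rewrite -[X in measurable X]setTI; apply: mphi => //; exact: measurable_funPTI.
apply: eq_bigr => i _.
under eq_integral do rewrite -mulrA EFinM.
rewrite integralZl //; last first.
  apply: (int_indic_mul (A := phi @^-1` (s @^-1` [set _]))) => //.
  by rewrite -[X in measurable X]setTI; apply: mphi => //; exact: measurable_funPTI.
congr (_ * _)%E.
exact: (ind_mul (phi @^-1` (s @^-1` [set _]))).
Qed.


Section ce_pos.
Variables (W G : T -> R) (mW : measurable_fun setT W) (mG : measurable_fun setT G)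
  (iW : mu.-integrable setT (fun x => (W x)%:E))
  (iG : mu.-integrable setT (fun x => (G x)%:E))
  (HWG : forall B, measurable B ->
    (\int[mu]_(x in phi @^-1` B) (W x)%:E = \int[mu]_(x in phi @^-1` B) (G x)%:E)%E).

Lemma ce_pos (f : S -> R) (mf : measurable_fun setT f) (f0 : forall y, 0 <= f y)
  (ifW : mu.-integrable setT (fun x => (f (phi x) * W x)%:E))
  (ifG : mu.-integrable setT (fun x => (f (phi x) * G x)%:E)) :
  (\int[mu]_x (f (phi x) * W x)%:E = \int[mu]_x (f (phi x) * G x)%:E)%E.
Proof.
have mEf : measurable_fun setT (EFin \o f) by exact/measurable_EFinP.
have Ef0 : forall y, setT y -> (0 <= (EFin \o f) y)%E by move=> y _; rewrite lee_fin.
pose h := nnsfun_approx measurableT mEf.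
have hf n y : 0 <= h n y <= f y.
  apply/andP; split; first exact: fun_ge0.
  have := le_approx n Ef0 (I : setT y).
  by rewrite -(nnsfun_approxE measurableT mEf) lee_fin.
have simple n : (\int[mu]_x (h n (phi x) * W x)%:E =
    \int[mu]_x (h n (phi x) * G x)%:E)%E.
  rewrite !ce_simple //; apply: eq_bigr => i _; rewrite HWG //.
have conv (V : T -> R) (mV : measurable_fun setT V)
    (iV : mu.-integrable setT (fun x => (f (phi x) * V x)%:E)) :
    ((fun n => \int[mu]_x (h n (phi x) * V x)%:E) @ \oo -->
     \int[mu]_x (f (phi x) * V x)%:E)%E.
  have mf_ : forall n, measurable_fun setT (fun x => (h n (phi x) * V x)%:E).
    move=> n; apply/measurable_EFinP; apply: measurable_funM => //.
    by apply: measurableT_comp => //; exact: measurable_funPT.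
  have mF : measurable_fun setT (fun x => (f (phi x) * V x)%:E).
    apply/measurable_EFinP; apply: measurable_funM => //.
    exact: measurableT_comp.
  have f_f : {ae mu, forall x, setT x ->
      (fun n => (h n (phi x) * V x)%:E) @ \oo --> (f (phi x) * V x)%:E}.
    apply: aeW => x _.
    under eq_fun do rewrite EFinM.
    rewrite EFinM; apply: cvgeZr => //.
    exact: (cvg_nnsfun_approx measurableT mEf Ef0 (x := phi x) I).
  have f_g : {ae mu, forall x n, setT x ->
      (`|(h n (phi x) * V x)%:E| <= (abse \o (fun x => (f (phi x) * V x)%:E)) x)%E}.
    apply: aeW => x n _ /=; rewrite lee_fin !normrM.
    apply: ler_wpM2r => //.
    have /andP[h0 hf'] := hf n (phi x).
    by rewrite !ger0_norm // (le_trans h0 hf').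
  have [_ _ c] := dominated_convergence measurableT mf_ mF f_f
    (integrable_abse iV) f_g.
  exact: c.
have cW := conv W mW ifW; have cG := conv G mG ifG.
rewrite (_ : (fun n => _) = (fun n => \int[mu]_x (h n (phi x) * G x)%:E)%E) in cW; last first.
  by apply: funext => n; exact: simple.
exact: (cvg_unique _ cW cG).
Qed.

Lemma ce_orth (psi : S -> R) (mpsi : measurable_fun setT psi)
  (ipW : mu.-integrable setT (fun x => (psi (phi x) * W x)%:E))
  (ipG : mu.-integrable setT (fun x => (psi (phi x) * G x)%:E)) :
  (\int[mu]_x (psi (phi x) * W x)%:E = \int[mu]_x (psi (phi x) * G x)%:E)%E.
Proof.
have pn y : psi y = psi^\+ y - psi^\- y.
  by rewrite -[in LHS](funrposBneg psi).
have ip (q : S -> R) (V : T -> R) : measurable_fun setT q -> measurable_fun setT V ->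
    (forall y, `|q y| <= `|psi y|) ->
    mu.-integrable setT (fun x => (psi (phi x) * V x)%:E) ->
    mu.-integrable setT (fun x => (q (phi x) * V x)%:E).
  move=> mq mV qp iV; apply: (le_integrable measurableT _ _ iV).
    apply/measurable_EFinP; apply: measurable_funM => //.
    exact: measurableT_comp.
  move=> x _; rewrite !abse_EFin lee_fin !normrM.
  by apply: ler_wpM2r => //.
have pp (z : S) : `|psi^\+ z| <= `|psi z|.
  rewrite ger0_norm ?funrpos_ge0 // /funrpos ge_max normr_ge0 andbT.
  exact: ler_norm.
have pm (z : S) : `|psi^\- z| <= `|psi z|.
  rewrite ger0_norm ?funrneg_ge0 // /funrneg ge_max normr_ge0 andbT.
  by rewrite -normrN; exact: ler_norm.
have mpp := measurable_funrpos mpsi; have mpm := measurable_funrneg mpsi.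
have eqV (V : T -> R) : mu.-integrable setT (fun x => (psi^\+ (phi x) * V x)%:E) ->
    mu.-integrable setT (fun x => (psi^\- (phi x) * V x)%:E) ->
    (\int[mu]_x (psi (phi x) * V x)%:E =
    \int[mu]_x (psi^\+ (phi x) * V x)%:E - \int[mu]_x (psi^\- (phi x) * V x)%:E)%E.
  move=> i1 i2; rewrite -integralB //; apply: eq_integral => x _.
  by rewrite -EFinB -mulrBl -pn.
have iWp := ip _ W mpp mW (pp) ipW; have iWm := ip _ W mpm mW (pm) ipW.
have iGp := ip _ G mpp mG (pp) ipG; have iGm := ip _ G mpm mG (pm) ipG.
rewrite (eqV W iWp iWm) (eqV G iGp iGm).
rewrite (@ce_pos psi^\+ mpp (@funrpos_ge0 _ _ psi) iWp iGp).
by rewrite (@ce_pos psi^\- mpm (@funrneg_ge0 _ _ psi) iWm iGm).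
Qed.

End ce_pos.

End CE.

Section CE2.
Context d d' (T : measurableType d) (S : measurableType d') (R : realType)
  (mu : measure T R) (muT : mu setT = 1%E).
Variables (phi : T -> S) (mphi : measurable_fun setT phi).

Lemma ce_L2 (W : T -> R) (g : S -> R) : L2 mu W -> is_cond_exp mu W phi g ->
  L2 mu (fun x => g (phi x)).
Proof.
move=> hW [mg [ig HWG]].
have mG : measurable_fun setT (fun x => g (phi x)) := measurableT_comp mg mphi.
split => //.
pose A n := (fun y => `|g y|) @^-1` [set` `]-oo, (n%:R : R)]].
have mA n : measurable (A n).
  rewrite -[A n]setTI; apply: (measurableT_comp (@normr_measurable R setT) mg) => //.
have Ain n y : (y \in A n) = (`|g y| <= n%:R).
  apply/idP/idP => [/set_mem|H]; last apply/mem_set; rewrite /A /= in_itv //=.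
pose psi n (y : S) := g y * \1_(A n) y.
have mpsi n : measurable_fun setT (psi n).
  by apply: measurable_funM => //; exact: measurable_indic.
have bpsi n y : `|psi n y| <= n%:R.
  rewrite /psi indicE; case: (boolP (y \in A n)).
    by rewrite mulr1 Ain.
  by rewrite mulr0 normr0.
have psiL2 n : L2 mu (fun x => psi n (phi x)).
  exact: (@L2_bounded _ _ _ mu muT _ _ (measurableT_comp (mpsi n) mphi) (fun x => bpsi n (phi x))).
have key n : Ex mu (fun x => psi n (phi x) ^+ 2) <= Ex mu (fun x => W x ^+ 2).
  have e1 : Ex mu (fun x => psi n (phi x) ^+ 2) = Ex mu (fun x => psi n (phi x) * g (phi x)).
    apply: eq_Ex => x; rewrite /psi indicE; case: (_ \in _).
      by rewrite mulr1 expr2.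
    by rewrite mulr0 expr2 !mul0r.
  have ipG : mu.-integrable setT (fun x => (psi n (phi x) * g (phi x))%:E).
    have iZ := integrableZl measurableT (n%:R) (integrable_abse ig).
    apply: (le_integrable measurableT _ _ iZ).
      apply/measurable_EFinP; apply: measurable_funM => //.
      exact: measurableT_comp.
    move=> x _ /=; rewrite lee_fin normrM (normrM _ `|_|) normr_id.
    by apply: ler_wpM2r => //; rewrite (le_trans (bpsi n (phi x))) // ger0_norm.
  have e2 : Ex mu (fun x => psi n (phi x) * g (phi x)) = Ex mu (fun x => psi n (phi x) * W x).
    rewrite /Ex; congr fine; apply/esym.
    apply: (@ce_orth _ _ _ _ _ mu phi mphi W (fun x => g (phi x))) => //.
    - exact: hW.1.
    - exact: L2_int.
    - exact: L2_mul.
  have e3 : Ex mu (fun x => 2 * (psi n (phi x) * W x)) <=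
            Ex mu (fun x => W x ^+ 2 + psi n (phi x) ^+ 2).
    apply: Ex_le.
    - by apply: (eq_integrable measurableT _ _ _ (integrableZl measurableT 2 (L2_mul (psiL2 n) hW))) => x _; rewrite EFinM.
    - by apply: (eq_integrable measurableT _ _ _ (integrableD measurableT hW.2 (psiL2 n).2)) => x _; rewrite EFinD.
    - move=> x /=; have := sqr_ge0 (W x - psi n (phi x)); nra.
  rewrite ExZ in e3; last exact: L2_mul.
  rewrite ExD in e3; [|exact: hW.2|exact: (psiL2 n).2].
  rewrite -e2 -e1 in e3.
  lra.
pose g' n x := ((psi n (phi x)) ^+ 2)%:E.
have mg' n : measurable_fun setT (g' n).
  by apply/measurable_EFinP; apply: measurable_funX; exact: measurableT_comp.
have g'0 n x : setT x -> (0 <= g' n x)%E by move=> _; rewrite lee_fin sqr_ge0.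
have nd_g' x : setT x -> {homo g'^~ x : n m / (n <= m)%N >-> (n <= m)%E}.
  move=> _ n m nm; rewrite /g' lee_fin /psi !indicE.
  case: (boolP (phi x \in A n)) => hn.
    have -> : phi x \in A m.
      rewrite Ain; move: hn; rewrite Ain => hn.
      by apply: (le_trans hn); rewrite ler_nat.
    by rewrite mulr1.
  by rewrite mulr0 expr2 mul0r sqr_ge0.
have cv := @cvg_monotone_convergence _ _ _ mu setT measurableT g' mg' g'0 nd_g'.
have limE x : limn (g'^~ x) = ((g (phi x)) ^+ 2)%:E.
  apply: cvg_lim => //; apply: cvg_near_cst.
  near=> n.
  rewrite /g' /psi indicE.
  have -> : phi x \in A n.
    rewrite Ain.
    near: n; exact: nbhs_infty_ger.
  by rewrite mulr1.
apply/integrableP; split.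
  by apply/measurable_EFinP; apply: measurable_funX.
under eq_integral do rewrite gee0_abs ?lee_fin ?sqr_ge0 //.
rewrite (_ : (fun x => _) = (fun x => limn (g'^~ x))); last first.
  by apply/funext => x; rewrite limE.
rewrite -(cvg_lim _ cv) //.
apply: (@le_lt_trans _ _ ((Ex mu (fun x => W x ^+ 2))%:E)); last exact: ltry.
apply: lime_le; first exact: (cvgP _ cv).
apply: nearW => n.
rewrite ExE; last exact: (psiL2 n).2.
by rewrite lee_fin key.
Unshelve. all: by end_near.
Qed.

Lemma ce_orthL2 (W : T -> R) (g : S -> R) : L2 mu W -> is_cond_exp mu W phi g ->
  forall psi : S -> R, measurable_fun setT psi -> L2 mu (fun x => psi (phi x)) ->
  Ex mu (fun x => W x * psi (phi x)) = Ex mu (fun x => g (phi x) * psi (phi x)).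
Proof.
move=> hW hce psi mpsi hpsi.
have hG := ce_L2 hW hce.
move: hce => [mg [ig HWG]].
rewrite /Ex; congr fine.
under eq_integral do rewrite mulrC.
rewrite (@ce_orth _ _ _ _ _ mu phi mphi W (fun x => g (phi x))) //.
- by apply: eq_integral => x _; rewrite mulrC.
- exact: hW.1.
- exact: measurableT_comp.
- exact: L2_int.
- by apply: (eq_integrable measurableT _ _ _ (L2_mul hW hpsi)) => x _; rewrite mulrC.
- by apply: (eq_integrable measurableT _ _ _ (L2_mul hG hpsi)) => x _; rewrite mulrC.
Qed.

End CE2.

Section prod.
Context d1 d2 (T1 : measurableType d1) (T2 : measurableType d2) (R : realType)
  (m1 : probability T1 R) (m2 : probability T2 R).

Lemma probT d (T : measurableType d) (Q : probability T R) :
  (Q : measure T R) setT = 1%E.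
Proof. exact: probability_setT. Qed.

Lemma prodT : (m1 \x m2)%E setT = 1%E.
Proof.
rewrite -setXTT product_measure1E // !probT.
by rewrite mule1.
Qed.

Lemma int_c2 (c : \bar R) : (\int[m2]_y c = c)%E.
Proof. by rewrite integral_cst //= probT mule1. Qed.

Lemma int_fst (F : T1 -> \bar R) : measurable_fun setT F ->
  (m1 \x m2)%E.-integrable setT (fun w => F w.1) <-> m1.-integrable setT F.
Proof.
move=> mF.
have mFf : measurable_fun setT (fun w : T1 * T2 => F w.1).
  exact: measurableT_comp mF measurable_fst.
rewrite (integrable12ltyP m1 m2 mFf).
rewrite (_ : (fun x => \int[m2]_y `|F (x, y).1|)%E = fun x => `|F x|%E); last first.
  by apply/funext => x /=; rewrite integral_cst //= probT mule1.
split => [h|/integrableP [_ h] //].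
by apply/integrableP; split.
Qed.

Lemma int_fstE (F : T1 -> \bar R) : measurable_fun setT F ->
  m1.-integrable setT F ->
  (\int[(m1 \x m2)%E]_w F w.1 = \int[m1]_x F x)%E.
Proof.
move=> mF iF.
rewrite -integral12_prod_meas1; last exact/int_fst.
apply: eq_integral => x _.
by rewrite /fubini_F /= integral_cst //= probT mule1.
Qed.

End prod.

End Helpers.
Import Helpers.

Theorem proposition4 (R : realType) (p r : nat) (hp : (0 < p)%N) (hr : (0 < r)%N)
  (f0 : vecT R p -> R) (M0 : 'M[R]_(p, r))
  (Lam0 : probability (R * vecT R p)%type R)
  (Q0 : set (probability (vecT R r) R)) (Qtr : probability (vecT R r) R)
  (* f0 measurable *)
  (Hf0 : measurable_fun setT f0)
  (* Lambda0: E[||(U,V)||^2] < oo and E[(U,V)] = 0 *)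
  (HLam2 : Lam0.-integrable setT
             (fun uv => (uv.1 ^+ 2 + \sum_(i < p) (uv.2 i ord0) ^+ 2)%:E))
  (HLamU : (\int[Lam0]_uv (uv.1)%:E = 0)%E)
  (HLamV : forall i : 'I_p, (\int[Lam0]_uv (uv.2 i ord0)%:E = 0)%E)
  (* sup_{P in P0} E_P[f0(X)^2] < oo *)
  (Hsup : exists C : R, forall Q, Q0 Q ->
     (\int[(Lam0 \x Q)%E]_w ((f0 (X_ M0 w)) ^+ 2)%:E <= C%:E)%E)
  (* training distribution *)
  (HQtr : Q0 Qtr)
  (HZmean : forall i : 'I_r, (\int[Qtr]_z (z i ord0)%:E = 0)%E)
  (HZ2 : forall i j : 'I_r, Qtr.-integrable setT (fun z => (z i ord0 * z j ord0)%:E))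
  (HZpd : forall a : 'cV[R]_r, a != 0 ->
     0 < (a^T *m (\matrix_(i, j) fine (\int[Qtr]_z (z i ord0 * z j ord0)%:E)) *m a)
           ord0 ord0)
  (* the matrix R (here Rm) *)
  (k : nat) (Rm : 'M[R]_(p, k))
  (HRlt : (\rank M0 < p)%N ->
     [/\ k = (p - \rank M0)%N, Rm^T *m Rm = 1%:M &
         forall x : 'cV[R]_p, M0^T *m x = 0 <-> exists a : 'cV[R]_k, x = Rm *m a])
  (HReq : \rank M0 = p -> k = 1%N /\ Rm = 0)
  (* gamma0 = E_Ptr[U | V = .] *)
  (gamma0 : vecT R p -> R)
  (Hgamma0 : is_cond_exp (Lam0 \x Qtr)%E U_ V_ gamma0)
  (* h = E_Ptr[gamma0(V) | R^T X = .], so that f* = bcf f0 Rm h *)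
  (h : vecT R k -> R)
  (Hh : is_cond_exp (Lam0 \x Qtr)%E (fun w => gamma0 (V_ w))
          (fun w => (Rm^T *m X_ M0 w : vecT R k)) h)
  (* g = E_Ptr[gamma0(V) | X = .] *)
  (g : vecT R p -> R)
  (Hg : is_cond_exp (Lam0 \x Qtr)%E (fun w => gamma0 (V_ w)) (X_ M0) g)
  (* fLS = E_Ptr[Y | X = .] *)
  (fLS : vecT R p -> R)
  (HfLS : is_cond_exp (Lam0 \x Qtr)%E (Y_ f0 M0) (X_ M0) fLS) :
  (* invariance: Ptr^{Y - f*(X)} = P^{Y - f*(X)} for every P in P0 *)
  (forall Q, Q0 Q -> forall A : set R, measurable A ->
     (Lam0 \x Qtr)%E ((fun w => Y_ f0 M0 w - bcf f0 Rm h (X_ M0 w)) @^-1` A) =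
     (Lam0 \x Q)%E ((fun w => Y_ f0 M0 w - bcf f0 Rm h (X_ M0 w)) @^-1` A)) /\
  (* risk decomposition *)
  (\int[(Lam0 \x Qtr)%E]_w ((Y_ f0 M0 w - bcf f0 Rm h (X_ M0 w)) ^+ 2)%:E =
   \int[(Lam0 \x Qtr)%E]_w ((Y_ f0 M0 w - fLS (X_ M0 w)) ^+ 2)%:E +
   \int[(Lam0 \x Qtr)%E]_w ((h (Rm^T *m X_ M0 w) - g (X_ M0 w)) ^+ 2)%:E)%E.
Proof.
have mU : measurable_fun setT (@U_ R p r).
  exact: (measurableT_comp measurable_fst measurable_fst).
have mV : measurable_fun setT (@V_ R p r).
  exact: (measurableT_comp measurable_snd measurable_fst).
have mZ : measurable_fun setT (@Z_ R p r) := measurable_snd.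
have mX : measurable_fun setT (X_ M0) := addv_mfun (mulmx_mfun M0 mZ) mV.
have mRX : measurable_fun setT (fun w => (Rm^T *m X_ M0 w : vecT R k)) :=
  mulmx_mfun _ mX.
have mf0X : measurable_fun setT (fun w => f0 (X_ M0 w)) := measurableT_comp Hf0 mX.
have mh : measurable_fun setT h := Hh.1.
have RM0 : Rm^T *m M0 = 0.
  case: (ltnP (\rank M0) p) => hrk.
    have [_ _ Hker] := HRlt hrk.
    have H0 : M0^T *m Rm = 0.
      apply/matrixP => i j.
      have -> : (M0^T *m Rm) i j = col j (M0^T *m Rm) i ord0 by rewrite [in RHS]mxE.
      by rewrite colE -mulmxA ((Hker _).2 (ex_intro _ _ erefl)) !mxE.
    by rewrite -(trmxK (Rm^T *m M0)) trmx_mul trmxK H0 trmx0.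
  case: HReq => [|_ ->]; last by rewrite trmx0 mul0mx.
  by apply/eqP; rewrite eqn_leq hrk rank_leq_row.
have RX_V w : Rm^T *m X_ M0 w = Rm^T *m V_ w.
  by rewrite /X_ mulmxDr mulmxA RM0 mul0mx add0r.
have resid w : Y_ f0 M0 w - bcf f0 Rm h (X_ M0 w) = U_ w - h (Rm^T *m X_ M0 w).
  by rewrite /Y_ /bcf; ring.
split.
  move=> Q HQ A mA.
  pose B := [set uv : R * vecT R p | A (uv.1 - h (Rm^T *m uv.2))].
  have mB : measurable B.
    have mfB : measurable_fun setT (fun uv : R * vecT R p => uv.1 - h (Rm^T *m uv.2)).
      apply: measurable_funB; first exact: measurable_fst.
      exact: (measurableT_comp mh (mulmx_mfun _ measurable_snd)).
    by rewrite -[B]setTI; apply: mfB.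
  have -> : (fun w => Y_ f0 M0 w - bcf f0 Rm h (X_ M0 w)) @^-1` A = B `*` setT.
    apply/seteqP; split => w /=; rewrite resid RX_V.
      by move=> ?; split.
    by case.
  by rewrite !product_measure1E // !probT.

have PT : (Lam0 \x Qtr)%E setT = 1%E := prodT Lam0 Qtr.
have L2U : L2 (Lam0 \x Qtr)%E (@U_ R p r).
  split => //.
  have mF : measurable_fun setT (fun uv : R * vecT R p => (uv.1 ^+ 2)%:E).
    by apply/measurable_EFinP; apply: measurable_funX; exact: measurable_fst.
  apply/(int_fst Lam0 Qtr mF).
  apply: (le_integrable measurableT mF _ HLam2) => uv _.
  rewrite !abse_EFin lee_fin !ger0_norm ?sqr_ge0 //.
    by rewrite lerDl; apply: sumr_ge0 => i _; exact: sqr_ge0.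
  by apply: addr_ge0; [exact: sqr_ge0|apply: sumr_ge0 => i _; exact: sqr_ge0].
have iU : (Lam0 \x Qtr)%E.-integrable setT (fun w => (U_ w)%:E) := L2_int PT L2U.
have L2G : L2 (Lam0 \x Qtr)%E (fun w => gamma0 (V_ w)) := ce_L2 PT mV L2U Hgamma0.
have L2f0X : L2 (Lam0 \x Qtr)%E (fun w => f0 (X_ M0 w)).
  split => //.
  have [C HC] := Hsup.
  apply/integrableP; split.
    by apply/measurable_EFinP; exact: measurable_funX.
  under eq_integral do rewrite gee0_abs ?lee_fin ?sqr_ge0 //.
  by apply: (le_lt_trans (HC Qtr HQtr)); exact: ltry.
have L2Y : L2 (Lam0 \x Qtr)%E (Y_ f0 M0) := L2D L2f0X L2U.
have L2gX : L2 (Lam0 \x Qtr)%E (fun w => g (X_ M0 w)) := ce_L2 PT mX L2G Hg.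
have L2hR : L2 (Lam0 \x Qtr)%E (fun w => h (Rm^T *m X_ M0 w)) := ce_L2 PT mRX L2G Hh.
have L2fX : L2 (Lam0 \x Qtr)%E (fun w => fLS (X_ M0 w)) := ce_L2 PT mX L2Y HfLS.
have [mgam [igam Hgam]] := Hgamma0.
have LamV (C : set (vecT R p)) : measurable C ->
    (\int[Lam0]_uv (\1_C uv.2 * uv.1)%:E =
     \int[Lam0]_uv (\1_C uv.2 * gamma0 uv.2)%:E)%E.
  move=> mC.
  have mF1 : measurable_fun setT (fun uv : R * vecT R p => (\1_C uv.2 * uv.1)%:E).
    apply/measurable_EFinP; apply: measurable_funM; last exact: measurable_fst.
    exact: (measurableT_comp (measurable_indic (R:=R) mC) measurable_snd).
  have mF2 : measurable_fun setT (fun uv : R * vecT R p => (\1_C uv.2 * gamma0 uv.2)%:E).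
    apply/measurable_EFinP; apply: measurable_funM.
      exact: (measurableT_comp (measurable_indic (R:=R) mC) measurable_snd).
    exact: (measurableT_comp mgam measurable_snd).
  have mVC : measurable (@V_ R p r @^-1` C).
    by have := mV measurableT C mC; rewrite setTI.
  have iP1 : (Lam0 \x Qtr)%E.-integrable setT (fun w => (\1_C w.1.2 * w.1.1)%:E).
    apply: (eq_integrable measurableT _ _ _ (int_indic_mul mVC mU iU)) => w _.
    by rewrite !indicE.
  have iP2 : (Lam0 \x Qtr)%E.-integrable setT (fun w => (\1_C w.1.2 * gamma0 w.1.2)%:E).
    apply: (eq_integrable measurableT _ _ _ (int_indic_mul mVC (L2G.1) igam)) => w _.
    by rewrite !indicE.
  have e1 := @int_fstE _ _ _ _ _ Lam0 Qtr _ mF1 (proj1 (int_fst Lam0 Qtr mF1) iP1).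
  have e2 := @int_fstE _ _ _ _ _ Lam0 Qtr _ mF2 (proj1 (int_fst Lam0 Qtr mF2) iP2).
  have H := Hgam C mC.
  rewrite -(ind_mul _ (@V_ R p r @^-1` C) U_) -(ind_mul _ (@V_ R p r @^-1` C) (fun w => gamma0 (V_ w))) in H.
  have E1 : (\int[(Lam0 \x Qtr)%E]_w (\1_C w.1.2 * w.1.1)%:E =
      \int[(Lam0 \x Qtr)%E]_w (\1_(@V_ R p r @^-1` C) w * U_ w)%:E)%E.
    by apply: eq_integral => w _; rewrite !indicE.
  have E2 : (\int[(Lam0 \x Qtr)%E]_w (\1_C w.1.2 * gamma0 w.1.2)%:E =
      \int[(Lam0 \x Qtr)%E]_w (\1_(@V_ R p r @^-1` C) w * gamma0 (V_ w))%:E)%E.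
    by apply: eq_integral => w _; rewrite !indicE.
  rewrite -e1 -e2 /=.
  by rewrite E1 E2.
have FUB (B : set (vecT R p)) : measurable B ->
    (\int[(Lam0 \x Qtr)%E]_(w in X_ M0 @^-1` B) (U_ w)%:E =
     \int[(Lam0 \x Qtr)%E]_(w in X_ M0 @^-1` B) (gamma0 (V_ w))%:E)%E.
  move=> mB.
  have mXB : measurable (X_ M0 @^-1` B).
    by have := mX measurableT B mB; rewrite setTI.
  rewrite -(ind_mul _ (X_ M0 @^-1` B) U_) -(ind_mul _ (X_ M0 @^-1` B) (fun w => gamma0 (V_ w))).
  have iP1 := int_indic_mul mXB mU iU.
  have iP2 := int_indic_mul mXB (L2G.1) igam.
  rewrite -(integral21_prod_meas1 iP1) -(integral21_prod_meas1 iP2).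
  apply: eq_integral => z _.
  have mCz : measurable [set v : vecT R p | B (M0 *m z + v)].
    have mt : measurable_fun setT (fun v : vecT R p => (M0 *m z + v : vecT R p)).
      apply: addv_mfun; [exact: measurable_cst | exact: measurable_id].
    by have := mt measurableT B mB; rewrite setTI.
  have := LamV _ mCz.
  rewrite /fubini_G.
  have E1 : (\int[Lam0]_x (\1_(X_ M0 @^-1` B) (x, z) * U_ (x, z))%:E =
      \int[Lam0]_uv (\1_[set v : vecT R p | B (M0 *m z + v)] uv.2 * uv.1)%:E)%E.
    by apply: eq_integral => uv _; rewrite !indicE.
  have E2 : (\int[Lam0]_x (\1_(X_ M0 @^-1` B) (x, z) * gamma0 (V_ (x, z)))%:E =
      \int[Lam0]_uv (\1_[set v : vecT R p | B (M0 *m z + v)] uv.2 * gamma0 uv.2)%:E)%E.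
    by apply: eq_integral => uv _; rewrite !indicE.
  by rewrite E1 E2.
have CondU : is_cond_exp (Lam0 \x Qtr)%E U_ (X_ M0) g.
  have [mg [ig Hg']] := Hg.
  split => //; split => // B mB.
  by rewrite FUB // Hg'.
pose gX w := g (X_ M0 w).
pose hR w := h (Rm^T *m X_ M0 w).
pose fX w := fLS (X_ M0 w).
pose f0X w := f0 (X_ M0 w).
pose a w := U_ w - gX w.
pose b w := gX w - hR w.
pose dd w := fX w - f0X w - gX w.
have La : L2 (Lam0 \x Qtr)%E a := L2B L2U L2gX.
have Lb : L2 (Lam0 \x Qtr)%E b := L2B L2gX L2hR.
have Ld : L2 (Lam0 \x Qtr)%E dd := L2B (L2B L2fX L2f0X) L2gX.
have mpsi1 : measurable_fun setT (fun x : vecT R p => g x - h (Rm^T *m x)).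
  apply: measurable_funB; first exact: Hg.1.
  have mRx : measurable_fun setT (fun x : vecT R p => (Rm^T *m x : vecT R k)).
    apply: mulmx_mfun.
    exact: measurable_id.
  exact: (measurableT_comp mh mRx).
have mpsi2 : measurable_fun setT (fun x : vecT R p => fLS x - f0 x - g x).
  apply: measurable_funB; last exact: Hg.1.
  apply: measurable_funB; [exact: HfLS.1 | exact: Hf0].
have O1b : Ex (Lam0 \x Qtr)%E (fun w => U_ w * b w) =
    Ex (Lam0 \x Qtr)%E (fun w => gX w * b w) := ce_orthL2 PT mX L2U CondU mpsi1 Lb.
have O1d : Ex (Lam0 \x Qtr)%E (fun w => U_ w * dd w) =
    Ex (Lam0 \x Qtr)%E (fun w => gX w * dd w) := ce_orthL2 PT mX L2U CondU mpsi2 Ld.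
have O2d : Ex (Lam0 \x Qtr)%E (fun w => Y_ f0 M0 w * dd w) =
    Ex (Lam0 \x Qtr)%E (fun w => fX w * dd w) := ce_orthL2 PT mX L2Y HfLS mpsi2 Ld.
have Eab : Ex (Lam0 \x Qtr)%E (fun w => a w * b w) = 0.
  rewrite (eq_Ex (Lam0 \x Qtr)%E (G := fun w => U_ w * b w - gX w * b w)); last first.
    by move=> w; rewrite /a mulrBl.
  by rewrite (ExB (L2_mul L2U Lb) (L2_mul L2gX Lb)) O1b subrr.
have Ead : Ex (Lam0 \x Qtr)%E (fun w => a w * dd w) = 0.
  rewrite (eq_Ex (Lam0 \x Qtr)%E (G := fun w => U_ w * dd w - gX w * dd w)); last first.
    by move=> w; rewrite /a mulrBl.
  by rewrite (ExB (L2_mul L2U Ld) (L2_mul L2gX Ld)) O1d subrr.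
have Edd : Ex (Lam0 \x Qtr)%E (fun w => dd w * dd w) = 0.
  have e : Ex (Lam0 \x Qtr)%E (fun w => Y_ f0 M0 w * dd w - fX w * dd w) =
      Ex (Lam0 \x Qtr)%E (fun w => a w * dd w - dd w * dd w).
    by apply: eq_Ex => w; rewrite /a /dd /gX /fX /f0X /Y_; ring.
  rewrite (ExB (L2_mul L2Y Ld) (L2_mul L2fX Ld)) O2d subrr in e.
  rewrite (ExB (L2_mul La Ld) (L2_mul Ld Ld)) Ead in e.
  by move: e; rewrite sub0r => /eqP; rewrite eq_sym oppr_eq0 => /eqP.
have LHSE : Ex (Lam0 \x Qtr)%E (fun w => (U_ w - hR w) ^+ 2) =
    Ex (Lam0 \x Qtr)%E (fun w => a w * a w) + 2 * Ex (Lam0 \x Qtr)%E (fun w => a w * b w) +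
    Ex (Lam0 \x Qtr)%E (fun w => b w * b w).
  rewrite (eq_Ex (Lam0 \x Qtr)%E (G := fun w => a w * a w + (2 * (a w * b w) + b w * b w))); last first.
    by move=> w; rewrite /a /b; ring.
  rewrite (ExD (L2_mul La La) (intD (intZ 2 (L2_mul La Lb)) (L2_mul Lb Lb))).
  rewrite (ExD (intZ 2 (L2_mul La Lb)) (L2_mul Lb Lb)).
  by rewrite (ExZ 2 (L2_mul La Lb)) addrA.
have RHS1 : Ex (Lam0 \x Qtr)%E (fun w => (Y_ f0 M0 w - fX w) ^+ 2) =
    Ex (Lam0 \x Qtr)%E (fun w => a w * a w) - (2 * Ex (Lam0 \x Qtr)%E (fun w => a w * dd w) -
    Ex (Lam0 \x Qtr)%E (fun w => dd w * dd w)).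
  rewrite (eq_Ex (Lam0 \x Qtr)%E (G := fun w => a w * a w - (2 * (a w * dd w) - dd w * dd w))); last first.
    by move=> w; rewrite /a /dd /gX /fX /f0X /Y_; ring.
  rewrite (ExB (L2_mul La La) (intB (intZ 2 (L2_mul La Ld)) (L2_mul Ld Ld))).
  rewrite (ExB (intZ 2 (L2_mul La Ld)) (L2_mul Ld Ld)).
  by rewrite (ExZ 2 (L2_mul La Ld)).
have RHS2 : Ex (Lam0 \x Qtr)%E (fun w => (hR w - gX w) ^+ 2) =
    Ex (Lam0 \x Qtr)%E (fun w => b w * b w).
  by apply: eq_Ex => w; rewrite /b; ring.
have L2res : L2 (Lam0 \x Qtr)%E (fun w => U_ w - hR w) := L2B L2U L2hR.
have L2r1 : L2 (Lam0 \x Qtr)%E (fun w => Y_ f0 M0 w - fX w) := L2B L2Y L2fX.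
have L2r2 : L2 (Lam0 \x Qtr)%E (fun w => hR w - gX w) := L2B L2hR L2gX.
rewrite (eq_integral (fun w => ((U_ w - hR w) ^+ 2)%:E)); last first.
  by move=> w _; rewrite resid.
rewrite (ExE (F := fun w => (U_ w - hR w) ^+ 2) L2res.2).
rewrite (ExE (F := fun w => (Y_ f0 M0 w - fX w) ^+ 2) L2r1.2).
rewrite (ExE (F := fun w => (hR w - gX w) ^+ 2) L2r2.2).
rewrite -EFinD; congr EFin.
rewrite LHSE RHS1 RHS2 Eab Ead Edd.
lra.
Qed.
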